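(* Let $A$ be a synaptic algebra, $p,q\in P$, $r:=[p,q]:=(p\vee q)\wedge(p\vee q^{\perp})\wedge(p^{\perp}\vee q)\wedge(p^{\perp}\vee q^{\perp})$, $c:=(pqp+p^{\perp}q^{\perp}p^{\perp})^{1/2}$ and $s:=(pq^{\perp}p+p^{\perp}qp^{\perp})^{1/2}$. Then: (i) $c^{\circ}Cp$, $c^{\circ}Cq$, $c^{\circ}Cs$, $c^{\circ}Cr$, $s^{\circ}Cp$, $s^{\circ}Cq$, $s^{\circ}Cr$, $s^{\circ}Cc$, and $c^{\circ}Cs^{\circ}$; (ii) $c^{\circ}=(p\vee q^{\perp})\wedge(p^{\perp}\vee q)$ and $s^{\circ}=(p\vee q)\wedge(p^{\perp}\vee q^{\perp})$; (iii) $(cs)^{\circ}=c^{\circ}s^{\circ}=c^{\circ}\wedge s^{\circ}=(p\vee q)\wedge(p\vee q^{\perp})\wedge(p^{\perp}\vee q)\wedge(p^{\perp}\vee q^{\perp})=r=[p,q]$; (iv) $c^2(s^{\circ})^{\perp}=(s^{\circ})^{\perp}c^2=(s^{\circ})^{\perp}$, whence $(s^{\circ})^{\perp}\le c^2\le c$; (v) $s^2(c^{\circ})^{\perp}=(c^{\circ})^{\perp}s^2=(c^{\circ})^{\perp}$, whence $(c^{\circ})^{\perp}\le s^2\le s$.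
   Context: Synaptic algebra (Foulis): $R$ is a real linear associative algebra with unit $1$, and $A\subseteq R$ is a real linear subspace with $1\in A$. For $a,b\in A$ write $aCb$ iff $ab=ba$; $C(a):=\{b\in A: aCb\}$; $CC(a):=\{b\in A: bCd \text{ for all } d\in C(a)\}$. $A$ is a synaptic algebra with enveloping algebra $R$ iff: (SA1) $A$ is a partially ordered archimedean real linear space with positive cone $A^+$, $1$ is an order unit, $\|\cdot\|$ the order-unit norm; (SA2) $a\in A\Rightarrow a^2\in A^+$; (SA3) $a,b\in A^+\Rightarrow aba\in A^+$; (SA4) if $a\in A$, $b\in A^+$, $aba=0$ then $ab=ba=0$; (SA5) if $a\in A^+$ there is $b\in A^+\cap CC(a)$ with $b^2=a$; (SA6) for $a\in A$ there is $p=p^2\in A$ with $ab=0\Leftrightarrow pb=0$ for all $b\in A$; (SA7) if $1\le a$ there is $b\in A$ with $ab=ba=1$; (SA8) if $a,b\in A$, $a_1\le a_2\le\cdots$ are pairwise commuting elements of $C(b)$ with $\|a-a_n\|\to0$, then $a\in C(b)$. $A$ is nondegenerate. $P:=\{p\in A:p=p^2\}$ with the inherited order is an orthomodular lattice with $p^{\perp}:=1-p$, meet $\wedge$, join $\vee$. For $0\le a$, $a^{1/2}$ is its unique positive square root in $A$. The carrier $a^{\circ}$ of $a\in A$ is the unique projection such that for all $b\in A$, $ab=0\Leftrightarrow a^{\circ}b=0$. (Here $c$ and $s$ commute, so $cs\in A$.) *)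

(* Defs.v *)
(* Enveloping algebra: Rg : algType F (real linear associative unital algebra;
   mathcomp's algType is a non-trivial ring, so 1 <> 0, i.e. nondegeneracy). *)
From HB Require Import structures.
From mathcomp Require Import all_boot all_order all_algebra.
From mathcomp Require Import reals.
From Stdlib Require Import ClassicalEpsilon.
Set Implicit Arguments.
Unset Strict Implicit.
Unset Printing Implicit Defensive.
Import GRing.Theory Num.Theory.
Local Open Scope ring_scope.

Section Synaptic.
Variables (F : realType) (Rg : algType F).
Variables (A pos : Rg -> Prop).

Definition sle (a b : Rg) : Prop := pos (b - a).

Definition cmt (a b : Rg) : Prop := a * b = b * a.

Definition CCset (a : Rg) (b : Rg) : Prop :=
  A b /\ forall d, A d -> cmt a d -> cmt b d.

Definition is_proj (p : Rg) : Prop := A p /\ p * p = p.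

Definition porth (p : Rg) : Rg := 1 - p.

(* ||x|| <= e in the order-unit norm, i.e. -e1 <= x <= e1 *)
Definition onorm_le (x : Rg) (e : F) : Prop :=
  sle (- (e *: 1)) x /\ sle x (e *: 1).

Record synaptic : Prop := {
  sub_0 : A 0;
  sub_D : forall a b, A a -> A b -> A (a + b);
  sub_Z : forall (k : F) a, A a -> A (k *: a);
  sub_1 : A 1;
  pos_sub : forall a, pos a -> A a;
  pos_0 : pos 0;
  pos_D : forall a b, pos a -> pos b -> pos (a + b);
  pos_Z : forall (k : F) a, 0 <= k -> pos a -> pos (k *: a);
  pos_antisym : forall a, pos a -> pos (- a) -> a = 0;
  archimedean : forall a b, A a -> A b ->
      (forall n : nat, sle (a *+ n) b) -> sle a 0;
  order_unit : forall a, A a -> exists n : nat,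
      sle (- (1 *+ n)) a /\ sle a (1 *+ n);
  sa2 : forall a, A a -> pos (a * a);
  sa3 : forall a b, pos a -> pos b -> pos (a * b * a);
  sa4 : forall a b, A a -> pos b -> a * b * a = 0 -> a * b = 0 /\ b * a = 0;
  sa5 : forall a, pos a -> exists b, pos b /\ CCset a b /\ b * b = a;
  sa6 : forall a, A a -> exists p, is_proj p /\
      (forall b, A b -> (a * b = 0 <-> p * b = 0));
  sa7 : forall a, sle 1 a -> exists b, A b /\ a * b = 1 /\ b * a = 1;
  sa8 : forall (a b : Rg) (an : nat -> Rg), A a -> A b ->
      (forall n, A (an n)) ->
      (forall n, sle (an n) (an n.+1)) ->
      (forall m n, cmt (an m) (an n)) ->
      (forall n, cmt (an n) b) ->
      (forall e : F, 0 < e -> exists N : nat, forall n, (N <= n)%N ->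
          onorm_le (a - an n) e) ->
      cmt a b
}.

Definition carrier (a : Rg) : Rg :=
  epsilon (inhabits 0) (fun p => is_proj p /\
    forall b, A b -> (a * b = 0 <-> p * b = 0)).

Definition psqrt (a : Rg) : Rg :=
  epsilon (inhabits 0) (fun b => pos b /\ b * b = a).

Definition pmeet (p q : Rg) : Rg :=
  epsilon (inhabits 0) (fun m => is_proj m /\ sle m p /\ sle m q /\
    forall x, is_proj x -> sle x p -> sle x q -> sle x m).

Definition pjoin (p q : Rg) : Rg :=
  epsilon (inhabits 0) (fun j => is_proj j /\ sle p j /\ sle q j /\
    forall x, is_proj x -> sle p x -> sle q x -> sle j x).

Definition pcomm (p q : Rg) : Rg :=
  pmeet (pmeet (pmeet (pjoin p q) (pjoin p (porth q)))
               (pjoin (porth p) q))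
        (pjoin (porth p) (porth q)).

End Synaptic.

(* Main.v *)
Require Import Defs.
From HB Require Import structures.
From mathcomp Require Import all_boot all_order all_algebra.
From mathcomp Require Import reals.
From Stdlib Require Import ClassicalEpsilon.
Import GRing.Theory Num.Theory.
Local Open Scope ring_scope.
Set Implicit Arguments.
Unset Strict Implicit.

Ltac expand := repeat (rewrite ?mulrBl ?mulrBr ?mulrDl ?mulrDr ?mul1r ?mulr1
  ?mulrN ?mulNr ?opprK ?opprB ?opprD ?mulrA).

Section Ident.
Variable (R : ringType).

Lemma uexp (p q : R) : p * p = p ->
  p * q * p + (1 - p) * (1 - q) * (1 - p) = 1 - p - q + (p * q + q * p).
Proof.
move=> pp. have pp' : forall x, x * p * p = x * p by move=> x; rewrite -mulrA pp.
expand. rewrite ?pp ?pp' !addrA.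
by rewrite [LHS](ACl (2*9*3*8*4*(1*7)*(5*6))) /= subrr addNr !addr0.
Qed.

Lemma usym (p q : R) : p * p = p -> q * q = q ->
  p * q * p + (1 - p) * (1 - q) * (1 - p) = q * p * q + (1 - q) * (1 - p) * (1 - q).
Proof.
move=> pp qq; rewrite !uexp // (addrC (q * p)); congr (_ + _).
by rewrite addrAC.
Qed.

Lemma uv1 (p q : R) : p * p = p ->
  p * q * p + (1 - p) * (1 - q) * (1 - p) + (p * (1 - q) * p + (1 - p) * q * (1 - p)) = 1.
Proof.
move=> pp. have pp' : forall x, x * p * p = x * p by move=> x; rewrite -mulrA pp.
expand. rewrite ?pp ?pp' !addrA.
by rewrite [LHS](ACl (2*(1*7)*(14*11)*(12*3)*(4*13)*(6*5)*(10*9)*(8*15))) /= !subrr !addr0.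
Qed.

Lemma Cup_gen (p q : R) : p * p = p ->
  (p * q * p + (1 - p) * (1 - q) * (1 - p)) * p = p * (p * q * p + (1 - p) * (1 - q) * (1 - p)).
Proof.
move=> pp.
have c0 : (1 - p) * p = 0 by rewrite mulrBl mul1r pp subrr.
have c0' : p * (1 - p) = 0 by rewrite mulrBr mulr1 pp subrr.
rewrite (mulrDl (p * q * p)) (mulrDr p (p * q * p)) -!mulrA pp c0 !mulr0 addr0.
by rewrite !mulrA pp c0' !mul0r addr0.
Qed.

Lemma comm3 (x y z : R) : x * z = z * x -> y * z = z * y -> x * y * z = z * (x * y).
Proof. by move=> xz yz; rewrite -mulrA yz mulrA xz -mulrA. Qed.

End Ident.

Section Basics.
Variables (F : realType) (Rg : algType F) (A pos : Rg -> Prop).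
Hypothesis HA : synaptic A pos.

Lemma A_N a : A a -> A (- a).
Proof. by move=> Ha; rewrite -scaleN1r; apply: (sub_Z HA). Qed.

Lemma A_B a b : A a -> A b -> A (a - b).
Proof. by move=> Ha Hb; apply: (sub_D HA) => //; apply: A_N. Qed.

Lemma pos_A a : pos a -> A a.
Proof. exact: (pos_sub HA). Qed.

Lemma A_sq a : A a -> A (a * a).
Proof. by move=> Ha; apply/pos_A/(sa2 HA). Qed.

Lemma pos1 : pos 1.
Proof. by rewrite -(mulr1 1); apply: (sa2 HA); apply: (sub_1 HA). Qed.

Lemma A_half x : A (x *+ 2) -> A x.
Proof.
move=> H; have -> : x = (2%:R ^-1 : F) *: (x *+ 2).
  rewrite -scaler_nat scalerA mulVf ?scale1r //.
  by rewrite pnatr_eq0.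
by apply: (sub_Z HA).
Qed.

Lemma A_J a b : A a -> A b -> A (a * b + b * a).
Proof.
move=> Ha Hb.
have -> : a * b + b * a = (a + b) * (a + b) - a * a - b * b.
  rewrite mulrDl !mulrDr -(addrA (a*a)) (addrC (a*a)) addrK.
  by rewrite addrA addrK.
by apply: A_B; [apply: A_B|]; apply: A_sq => //; apply: (sub_D HA).
Qed.

Lemma A_comm a b : A a -> A b -> a * b = b * a -> A (a * b).
Proof.
move=> Ha Hb E; apply: A_half; rewrite mulr2n; rewrite {2}E.
exact: A_J.
Qed.

Lemma A_sand a b : A a -> A b -> A (a * b * a).
Proof.
move=> Ha Hb; apply: A_half.
have -> : (a * b * a) *+ 2 = (a * (a * b + b * a) + (a * b + b * a) * a)
    - (a * a * b + b * (a * a)).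
  rewrite mulrDr mulrDl !mulrA mulr2n (addrC (a*b*a) (b*a*a)) addrACA.
  by rewrite [X in X - _]addrC addrK.
by apply: A_B; [apply: A_J => //; apply: A_J | apply: A_J => //; apply: A_sq].
Qed.


Lemma sq0 x : A x -> x * x = 0 -> x = 0.
Proof.
move=> Ha H; have := sa4 HA Ha pos1; rewrite !mulr1 => /(_ H) [] //.
Qed.

Lemma zero_sym a b : A a -> A b -> a * b = 0 -> b * a = 0.
Proof.
move=> Ha Hb E.
have Hba : A (b * a) by have := A_J Ha Hb; rewrite E add0r.
apply: sq0 => //.
by rewrite mulrA -(mulrA b) E mulr0 mul0r.
Qed.

Lemma pos_add0 a b : pos a -> pos b -> a + b = 0 -> a = 0.
Proof.
move=> Pa Pb E; apply: (pos_antisym HA) => //.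
have -> : - a = b by apply/esym/eqP; rewrite -addr_eq0 addrC E.
done.
Qed.

Lemma proj_pos e : is_proj A e -> pos e.
Proof. by case=> Ae E; rewrite -E; apply: (sa2 HA). Qed.

Lemma proj_A e : is_proj A e -> A e.
Proof. by case. Qed.

Lemma projK e : is_proj A e -> e * e = e.
Proof. by case. Qed.

Lemma proj_c e : is_proj A e -> is_proj A (1 - e).
Proof.
case=> Ae E; split; first by apply: A_B => //; apply: (sub_1 HA).
by rewrite mulrBl mul1r mulrBr mulr1 E subrr subr0.
Qed.

Lemma proj_c0 e : is_proj A e -> e * (1 - e) = 0.
Proof. by case=> _ E; rewrite mulrBr mulr1 E subrr. Qed.

Lemma proj_c0' e : is_proj A e -> (1 - e) * e = 0.
Proof. by case=> _ E; rewrite mulrBl mul1r E subrr. Qed.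

Lemma sand_pos x y : A x -> pos y -> x * y = y * x -> pos (x * y * x).
Proof.
move=> Ax Py E.
have [b [Pb [[Ab Cb] Eb]]] := sa5 HA Py.
have Cbx : b * x = x * b by apply: Cb => //; rewrite /cmt E.
rewrite -Eb mulrA -mulrA Cbx; apply: (sa2 HA); apply: A_comm => //.
Qed.

Lemma comm_pos x y : pos x -> pos y -> x * y = y * x -> pos (x * y).
Proof.
move=> Px Py E.
have [b [Pb [[Ab Cb] Eb]]] := sa5 HA Px.
have Cby : b * y = y * b by apply: Cb => //; apply: pos_A.
rewrite -Eb -mulrA Cby mulrA; exact: (sa3 HA).
Qed.

Lemma proj_swap e f : is_proj A e -> is_proj A f -> f * e = e -> e * f = e.
Proof.
move=> Pe Pf E.
have H : (1 - f) * e = 0 by rewrite mulrBl mul1r E subrr.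
have := zero_sym (proj_A (proj_c Pf)) (proj_A Pe) H.
by rewrite mulrBr mulr1 => /eqP; rewrite subr_eq0 => /eqP <-.
Qed.

Lemma proj_swap' e f : is_proj A e -> is_proj A f -> e * f = e -> f * e = e.
Proof.
move=> Pe Pf E.
have H : e * (1 - f) = 0 by rewrite mulrBr mulr1 E subrr.
have := zero_sym (proj_A Pe) (proj_A (proj_c Pf)) H.
by rewrite mulrBl mul1r => /eqP; rewrite subr_eq0 => /eqP <-.
Qed.

Lemma proj_le e f : is_proj A e -> is_proj A f -> (sle pos e f <-> f * e = e).
Proof.
move=> Pe Pf; split.
  rewrite /sle => Pfe.
  have P1 : pos ((1 - f) * e * (1 - f)) by apply: (sa3 HA); [apply: proj_pos; apply: proj_c|apply: proj_pos].
  have P2 : pos ((1 - f) * (f - e) * (1 - f)) by apply: (sa3 HA) => //; apply: proj_pos; apply: proj_c.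
  have E2 : (1 - f) * (f - e) * (1 - f) = - ((1 - f) * e * (1 - f)).
    by rewrite (mulrBr (1 - f) f e) proj_c0' // sub0r mulNr.
  rewrite E2 in P2.
  have Z := pos_antisym HA P1 P2.
  have [Z1 _] := sa4 HA (proj_A (proj_c Pf)) (proj_pos Pe) Z.
  by move: Z1; rewrite mulrBl mul1r => /eqP; rewrite subr_eq0 => /eqP <-.
move=> E; have E' := proj_swap Pe Pf E; rewrite /sle.
have -> : f - e = (f - e) * (f - e).
  by rewrite mulrBl !mulrBr E E' !projK // subrr subr0.
apply: (sa2 HA); apply: A_B; apply: proj_A => //.
Qed.


Lemma m1B0 (x y : Rg) : x * (1 - y) = 0 -> x = x * y.
Proof. by rewrite mulrBr mulr1 => /eqP; rewrite subr_eq0 => /eqP. Qed.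

Lemma m1B0' (x y : Rg) : (1 - y) * x = 0 -> x = y * x.
Proof. by rewrite mulrBl mul1r => /eqP; rewrite subr_eq0 => /eqP. Qed.

Lemma m1B0r (x y : Rg) : x = x * y -> x * (1 - y) = 0.
Proof. by move=> E; rewrite mulrBr mulr1 -E subrr. Qed.

Lemma m1B0r' (x y : Rg) : x = y * x -> (1 - y) * x = 0.
Proof. by move=> E; rewrite mulrBl mul1r -E subrr. Qed.

Lemma le_antisym x y : sle pos x y -> sle pos y x -> x = y.
Proof.
rewrite /sle => H1 H2; rewrite -opprB in H2.
by have /eqP := pos_antisym HA H1 H2; rewrite subr_eq0 => /eqP.
Qed.

Notation car := (carrier A).

Lemma car_spec a : A a -> is_proj A (car a) /\ forall b, A b -> (a * b = 0 <-> car a * b = 0).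
Proof.
move=> Ha; rewrite /carrier.
apply: (@epsilon_spec _ (inhabits 0) (fun p => is_proj A p /\
  forall b, A b -> (a * b = 0 <-> p * b = 0))).
by have [p [Pp Hp]] := sa6 HA Ha; exists p.
Qed.

Lemma car_P a : A a -> is_proj A (car a).
Proof. by move=> Ha; case: (car_spec Ha). Qed.

Lemma car_r a : A a -> a * car a = a.
Proof.
move=> Ha; have [Pe He] := car_spec Ha.
apply/esym/m1B0; apply/He; first by apply: proj_A; apply: proj_c.
exact: proj_c0.
Qed.

Lemma car_l a : A a -> car a * a = a.
Proof.
move=> Ha; have [Pe He] := car_spec Ha.
apply/esym/m1B0'; apply: zero_sym => //; first by apply: proj_A; apply: proj_c.
by apply: m1B0r; rewrite car_r.
Qed.

Lemma car_uniq a g : A a -> is_proj A g ->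
  (forall b, A b -> (a * b = 0 <-> g * b = 0)) -> car a = g.
Proof.
move=> Ha Pg Hg; have [Pe He] := car_spec Ha.
have Ae := proj_A Pe; have Ag := proj_A Pg.
have A1e := proj_A (proj_c Pe); have A1g := proj_A (proj_c Pg).
have E1 : g * (1 - car a) = 0 by apply/Hg => //; apply: m1B0r; rewrite car_r.
have E2 : car a * (1 - g) = 0.
  apply/He => //; apply/Hg => //; exact: proj_c0.
have E3 := zero_sym Ag A1e E1.
rewrite (m1B0 E2); exact/esym/m1B0'.
Qed.

Lemma car_comm a d : A a -> A d -> a * d = d * a -> car a * d = d * car a.
Proof.
move=> Ha Ad Cad; set e := car a.
have [Pe He] := car_spec Ha; have Ae := proj_A Pe.
have a1e : a * (1 - e) = 0 by apply: m1B0r; rewrite car_r.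
set b := e * d * (1 - e) + (1 - e) * d * e.
have Ab : A b.
  rewrite /b mulrBr mulr1 !mulrBl !mul1r addrACA -opprD.
  by apply: A_B; [apply: A_J|apply: (sub_D HA); apply: A_sand].
have ab : a * b = 0.
  by rewrite /b mulrDr !mulrA car_r // Cad -(mulrA d) a1e mulr0 add0r !mul0r.
have eb : e * b = 0 by apply: (proj1 (He b Ab)).
have be : b * e = 0 by apply: zero_sym.
move: eb; rewrite /b mulrDr !mulrA projK // proj_c0 // !mul0r addr0 => /m1B0 E1.
move: be; rewrite /b (mulrDl (e * d * (1 - e))) -!mulrA proj_c0' // !mulr0 add0r.
rewrite projK // => /m1B0' E2.
by rewrite E1 E2 mulrA.
Qed.

Lemma psqrt_spec u : pos u ->
  pos (psqrt pos u) /\ CCset A u (psqrt pos u) /\ psqrt pos u * psqrt pos u = u.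
Proof.
move=> Pu; have [b [Pb [CCb Eb]]] := sa5 HA Pu.
have [Pd Ed] : pos (psqrt pos u) /\ psqrt pos u * psqrt pos u = u.
  rewrite /psqrt; apply: (@epsilon_spec _ (inhabits 0)
     (fun b => pos b /\ b * b = u)); by exists b.
set d := psqrt pos u in Pd Ed *.
suff -> : d = b by [].
have Ab := pos_A Pb; have Ad := pos_A Pd.
have Cbd : b * d = d * b by apply: CCb.2 => //; rewrite /cmt -Ed mulrA.
set x := b - d.
have Ax : A x by apply: A_B.
have Cxb : x * b = b * x by rewrite /x mulrBl mulrBr Cbd.
have Cxd : x * d = d * x by rewrite /x mulrBl mulrBr Cbd.
have E0 : x * (b + d) * x = 0.
  rewrite /x mulrBl !mulrDr Eb Ed Cbd.
  by rewrite (addrC (d * b) u) subrr !mul0r addr0.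
have E1 : x * b * x + x * d * x = 0 by rewrite -mulrDl -mulrDr.
have Pb' := sand_pos Ax Pb Cxb; have Pd' := sand_pos Ax Pd Cxd.
have Z1 := pos_add0 Pb' Pd' E1.
have Z2 : x * d * x = 0 by apply: (pos_add0 Pd' Pb'); rewrite addrC.
have [_ Hb] := sa4 HA Ax Pb Z1.
have [_ Hd] := sa4 HA Ax Pd Z2.
have : x * x = 0 by rewrite {1}/x mulrBl Hb Hd subrr.
move/(sq0 Ax)/eqP; rewrite subr_eq0 => /eqP ->; done.
Qed.


Lemma car_sq a : A a -> car (a * a) = car a.
Proof.
move=> Ha; have Aaa := A_sq Ha.
have [Pe He] := car_spec Ha.
apply: car_uniq => // b Ab; split; last first.
  by move/(He b Ab) => ab; rewrite -mulrA ab mulr0.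
have [Pe2 He2] := car_spec Aaa.
set e2 := car (a * a) in Pe2 He2 *.
have C2 : e2 * a = a * e2 by apply: car_comm => //; rewrite mulrA.
have Cy : a * (1 - e2) = (1 - e2) * a by rewrite mulrBr mulrBl mulr1 mul1r C2.
have Ax : A (a * (1 - e2)) by apply: A_comm => //; apply: proj_A; apply: proj_c.
have Z : a * a * (1 - e2) = 0 by apply: m1B0r; rewrite car_r.
have : a * (1 - e2) * (a * (1 - e2)) = 0.
  by rewrite {1}Cy -!mulrA (mulrA a a) Z mulr0.
move/(sq0 Ax)/m1B0 => Ea ab.
apply/(He b Ab); rewrite Ea -mulrA.
have -> : e2 * b = 0 by apply/(He2 b Ab).
by rewrite mulr0.
Qed.

Lemma le_car_add e f : is_proj A e -> is_proj A f -> car (e + f) * e = e.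
Proof.
move=> Pe Pf; have Aef : A (e + f) by apply: (sub_D HA); apply: proj_A.
have [Pg Hg] := car_spec Aef; set g := car (e + f) in Pg Hg *.
have Ph := proj_c Pg.
have Z : (1 - g) * (e + f) * (1 - g) = 0.
  by rewrite -mulrA (m1B0r (esym (car_r Aef))) mulr0.
move: Z; rewrite (mulrDr (1 - g) e f) (mulrDl ((1 - g) * e) ((1 - g) * f)) => Z.
have P1 : pos ((1 - g) * e * (1 - g)) by apply: (sa3 HA); apply: proj_pos.
have P2 : pos ((1 - g) * f * (1 - g)) by apply: (sa3 HA); apply: proj_pos.
have Z1 := pos_add0 P1 P2 Z.
have [Z2 _] := sa4 HA (proj_A Ph) (proj_pos Pe) Z1.
exact/esym/m1B0'.
Qed.

Lemma join_eq e f : is_proj A e -> is_proj A f -> pjoin A pos e f = car (e + f).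
Proof.
move=> Pe Pf; have Aef : A (e + f) by apply: (sub_D HA); apply: proj_A.
have [Pg Hg] := car_spec Aef; set g := car (e + f) in Pg Hg *.
have Le : sle pos e g by apply/proj_le => //; apply: le_car_add.
have Lf : sle pos f g by apply/proj_le => //; rewrite /g addrC; apply: le_car_add.
have Least : forall x, is_proj A x -> sle pos e x -> sle pos f x -> sle pos g x.
  move=> x Px /(proj_le Pe Px) Ex /(proj_le Pf Px) Fx.
  apply/proj_le => //; apply: proj_swap' => //.
  apply/esym/m1B0; apply/(Hg _ (proj_A (proj_c Px))).
  rewrite mulrDl !m1B0r ?addr0 //; by rewrite proj_swap.
have [Pj [Lej [Lfj Hj]]] : is_proj A (pjoin A pos e f) /\ sle pos e (pjoin A pos e f) /\
    sle pos f (pjoin A pos e f) /\ forall x, is_proj A x -> sle pos e x -> sle pos f x ->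
    sle pos (pjoin A pos e f) x.
  rewrite /pjoin; apply: (@epsilon_spec _ (inhabits 0) (fun j => is_proj A j /\ sle pos e j /\ sle pos f j /\
    forall x, is_proj A x -> sle pos e x -> sle pos f x -> sle pos j x)).
  by exists g.
by apply: le_antisym; [apply: Hj | apply: Least].
Qed.

Lemma proj_mul e f : is_proj A e -> is_proj A f -> e * f = f * e -> is_proj A (e * f).
Proof.
move=> Pe Pf C; split; first by apply: A_comm => //; apply: proj_A.
by rewrite mulrA -(mulrA e) -C mulrA projK // -mulrA projK.
Qed.

Lemma meet_eq e f : is_proj A e -> is_proj A f -> e * f = f * e -> pmeet A pos e f = e * f.
Proof.
move=> Pe Pf C; have Pm := proj_mul Pe Pf C.
have Le : sle pos (e * f) e by apply/proj_le => //; rewrite mulrA projK.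
have Lf : sle pos (e * f) f by apply/proj_le => //; rewrite C mulrA projK.
have Gr : forall x, is_proj A x -> sle pos x e -> sle pos x f -> sle pos x (e * f).
  move=> x Px /(proj_le Px Pe) Ex /(proj_le Px Pf) Fx.
  by apply/proj_le => //; rewrite -mulrA Fx Ex.
have [Pj [Lej [Lfj Hj]]] : is_proj A (pmeet A pos e f) /\ sle pos (pmeet A pos e f) e /\
    sle pos (pmeet A pos e f) f /\ forall x, is_proj A x -> sle pos x e -> sle pos x f ->
    sle pos x (pmeet A pos e f).
  rewrite /pmeet; apply: (@epsilon_spec _ (inhabits 0) (fun m => is_proj A m /\ sle pos m e /\ sle pos m f /\
    forall x, is_proj A x -> sle pos x e -> sle pos x f -> sle pos x m)).
  by exists (e * f).
by apply: le_antisym; [apply: Gr | apply: Hj].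
Qed.


Lemma commB1 (a y : Rg) : a * y = y * a -> a * (1 - y) = (1 - y) * a.
Proof. by move=> C; rewrite mulrBr mulrBl mulr1 mul1r C. Qed.

Lemma car_comm_self x : A x -> car x * x = x * car x.
Proof. by move=> Ax; apply: car_comm. Qed.

Lemma car_prod x y : A x -> A y -> x * y = y * x -> car (x * y) = car x * car y.
Proof.
move=> Ax Ay C.
have Axy : A (x * y) := A_comm Ax Ay C.
have [Pex Hex] := car_spec Ax; have [Pey Hey] := car_spec Ay.
have [Pg Hg] := car_spec Axy.
have Aex := proj_A Pex; have Aey := proj_A Pey; have Ag := proj_A Pg.
have Cexy : car x * y = y * car x := car_comm Ax Ay C.
have Cexey : car y * car x = car x * car y := car_comm Ay Aex (esym Cexy).
apply: car_uniq => //; first by apply: proj_mul.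
move=> b Ab; split; last first.
  have Exy : x * y = x * y * (car x * car y).
    rewrite mulrA -(mulrA x y) -Cexy mulrA car_r // -mulrA car_r //.
  by move=> E; rewrite Exy -mulrA E !mulr0.
move=> /(Hg b Ab) gb.
have Eb : b = (1 - car (x * y)) * b by rewrite mulrBl mul1r gb subr0.
have Cgy : car (x * y) * y = y * car (x * y).
  by apply: car_comm => //; rewrite {1}C -mulrA.
have Cgex : car (x * y) * car x = car x * car (x * y).
  apply: car_comm => //.
  by rewrite -mulrA -Cexy mulrA -car_comm_self // mulrA.
have Ah := proj_A (proj_c Pg).
have Ayh : A (y * (1 - car (x * y))) by apply: A_comm => //; apply: commB1; rewrite Cgy.
have Aexh : A (car x * (1 - car (x * y))) by apply: A_comm => //; apply: commB1; rewrite Cgex.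
have Z1 : x * (y * (1 - car (x * y))) = 0.
  by rewrite mulrA; apply: m1B0r; rewrite car_r.
have Z2 : car x * (y * (1 - car (x * y))) = 0 by apply/(Hex _ Ayh).
have Z3 : y * (car x * (1 - car (x * y))) = 0 by rewrite mulrA -Cexy -mulrA.
have Z4 : car y * (car x * (1 - car (x * y))) = 0 by apply/(Hey _ Aexh).
by rewrite Eb mulrA -Cexey -(mulrA (car y)) Z4 mul0r.
Qed.


Lemma commC (a b : Rg) : a * b = b * a -> (1 - a) * (1 - b) = (1 - b) * (1 - a).
Proof.
move=> C; rewrite !mulrBr !mulrBl !mul1r !mulr1 C.
rewrite !opprB !addrA.
by rewrite [LHS]addrAC [RHS]addrAC [in LHS](addrAC 1).
Qed.

Lemma le_car_add' e f : is_proj A e -> is_proj A f -> car (e + f) * f = f.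
Proof. by move=> Pe Pf; rewrite addrC; apply: le_car_add. Qed.

Lemma sw0 (x y : Rg) : x * y = 0 -> (1 - x) * y = y.
Proof. by move=> E; rewrite mulrBl mul1r E subr0. Qed.

Lemma key p q : is_proj A p -> is_proj A q ->
  car (p * q * p + (1 - p) * (1 - q) * (1 - p)) =
  car (p + (1 - q)) * car ((1 - p) + q) /\
  car (p + (1 - q)) * car ((1 - p) + q) = car ((1 - p) + q) * car (p + (1 - q)).
Proof.
move=> Pp Pq.
have Ppc := proj_c Pp; have Pqc := proj_c Pq.
have Ap := proj_A Pp; have Aq := proj_A Pq.
have Apc := proj_A Ppc; have Aqc := proj_A Pqc.
set u := p * q * p + (1 - p) * (1 - q) * (1 - p).
have Pu : pos u.
  by apply: (pos_D HA); apply: (sa3 HA); apply: proj_pos.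
have Au := pos_A Pu.
have A1 : A (p + (1 - q)) by apply: (sub_D HA).
have A2 : A ((1 - p) + q) by apply: (sub_D HA).
have PJ1 := car_P A1; have PJ2 := car_P A2.
set J1 := car (p + (1 - q)) in PJ1 *.
set J2 := car ((1 - p) + q) in PJ2 *.
have AJ1 := proj_A PJ1; have AJ2 := proj_A PJ2.
have J1p : J1 * p = p by apply: le_car_add.
have J1qc : J1 * (1 - q) = 1 - q by apply: le_car_add'.
have J2pc : J2 * (1 - p) = 1 - p by apply: le_car_add.
have J2q : J2 * q = q by apply: le_car_add'.
have pJ1 : p * J1 = p by apply: proj_swap.
have qcJ1 : (1 - q) * J1 = 1 - q by apply: proj_swap.
have pcJ2 : (1 - p) * J2 = 1 - p by apply: proj_swap.
have qJ2 : q * J2 = q by apply: proj_swap.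
have pk1 : p * (1 - J1) = 0 by apply: m1B0r.
have qck1 : (1 - q) * (1 - J1) = 0 by apply: m1B0r.
have pck2 : (1 - p) * (1 - J2) = 0 by apply: m1B0r.
have qk2 : q * (1 - J2) = 0 by apply: m1B0r.
have k1p : (1 - J1) * p = 0 by apply: m1B0r'.
have k2pc : (1 - J2) * (1 - p) = 0 by apply: m1B0r'.
have pck1 : (1 - p) * (1 - J1) = 1 - J1 by apply: sw0.
have pk2 : p * (1 - J2) = 1 - J2.
  by move: (sw0 pck2); rewrite opprB addrC subrK.
have uk1 : u * (1 - J1) = 0.
  by rewrite /u mulrDl -!mulrA pk1 pck1 qck1 !mulr0 addr0.
have uk2 : u * (1 - J2) = 0.
  by rewrite /u mulrDl -!mulrA pk2 qk2 pck2 !mulr0 addr0.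
have k12 : (1 - J1) * (1 - J2) = 0 by rewrite -pk2 mulrA k1p mul0r.
have k21 : (1 - J2) * (1 - J1) = 0 by rewrite -pck1 mulrA k2pc mul0r.
have CJ : J1 * J2 = J2 * J1.
  have := commC (etrans k12 (esym k21)); by rewrite !subKr.
have PJ := proj_mul PJ1 PJ2 CJ.
split; last exact: CJ.
apply: car_uniq => // b Ab; split; last first.
  have uJ : u = u * (J1 * J2) by rewrite mulrA -(m1B0 uk1) -(m1B0 uk2).
  by move=> E; rewrite uJ -mulrA E mulr0.
have [Pe He] := car_spec Au.
move=> /(He b Ab) eb.
have Eb : b = (1 - car u) * b by rewrite mulrBl mul1r eb subr0.
set h := 1 - car u in Eb *.
have Ph : is_proj A h := proj_c Pe.
have Ah := proj_A Ph.
have uh : u * h = 0 by apply: m1B0r; rewrite car_r.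
have Cup : u * p = p * u.
  rewrite /u (mulrDl (p * q * p)) (mulrDr p (p * q * p)) -!mulrA projK // proj_c0' // !mulr0 addr0.
  by rewrite !mulrA projK // proj_c0 // !mul0r addr0.
have Chp : p * h = h * p.
  by rewrite /h commB1 //; symmetry; apply: car_comm.
clearbody h.
have Chpc : (1 - p) * h = h * (1 - p).
  exact: (esym (commB1 (esym Chp))).
have Php : is_proj A (h * p) by apply: proj_mul.
have Phpc : is_proj A (h * (1 - p)) by apply: proj_mul.
have Z : h * p * q * (h * p) + h * (1 - p) * (1 - q) * (h * (1 - p)) = 0.
  have : h * (u * h) = 0 by rewrite uh mulr0.
  rewrite /u (mulrDl (p * q * p)) (mulrDr h (p * q * p * h)).
  have -> : h * (p * q * p * h) = h * p * q * (h * p).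
    by rewrite -(mulrA (p * q) p h) Chp !mulrA.
  have -> : h * ((1 - p) * (1 - q) * (1 - p) * h) = h * (1 - p) * (1 - q) * (h * (1 - p)).
    by rewrite -(mulrA ((1 - p) * (1 - q)) (1 - p) h) Chpc !mulrA.
  done.
have P1 : pos (h * p * q * (h * p)).
  by apply: (sa3 HA); apply: proj_pos.
have P2 : pos (h * (1 - p) * (1 - q) * (h * (1 - p))).
  by apply: (sa3 HA); apply: proj_pos.
have Z1 := pos_add0 P1 P2 Z.
have Z2 : h * (1 - p) * (1 - q) * (h * (1 - p)) = 0.
  by apply: (pos_add0 P2 P1); rewrite addrC.
have [hpq _] := sa4 HA (proj_A Php) (proj_pos Pq) Z1.
have [hpcqc _] := sa4 HA (proj_A Phpc) (proj_pos Pqc) Z2.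
have E1 : h * p * ((1 - p) + q) = 0.
  by rewrite mulrDr hpq addr0 -mulrA proj_c0 // mulr0.
have E2 : h * (1 - p) * (p + (1 - q)) = 0.
  by rewrite mulrDr hpcqc addr0 -mulrA proj_c0' // mulr0.
have [_ H2] := car_spec A2; have [_ H1] := car_spec A1.
have J2hp : J2 * (h * p) = 0.
  by apply/(H2 _ (proj_A Php)); apply: zero_sym => //; apply: proj_A.
have J1hpc : J1 * (h * (1 - p)) = 0.
  by apply/(H1 _ (proj_A Phpc)); apply: zero_sym => //; apply: proj_A.
have k2hpc : (1 - J2) * (h * (1 - p)) = 0 by rewrite -Chpc mulrA k2pc mul0r.
have J2hpc : J2 * (h * (1 - p)) = h * (1 - p) by apply/esym/m1B0'.
have hsplit : h = h * p + h * (1 - p) by rewrite mulrBr mulr1 addrC subrK.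
by rewrite Eb mulrA -(mulrA J1) hsplit mulrDr J2hp add0r J2hpc J1hpc mul0r.
Qed.


Lemma JC e f g : is_proj A e -> is_proj A f -> is_proj A g ->
  car (e + f) * car (g + (1 - f)) = car (g + (1 - f)) * car (e + f).
Proof.
move=> Pe Pf Pg; have Pfc := proj_c Pf.
have A1 : A (e + f) by apply: (sub_D HA); apply: proj_A.
have A2 : A (g + (1 - f)) by apply: (sub_D HA); apply: proj_A.
have PJ1 := car_P A1; have PJ2 := car_P A2.
have J1f : car (e + f) * f = f by apply: le_car_add'.
have fJ1 : f * car (e + f) = f by apply: proj_swap.
have J2fc : car (g + (1 - f)) * (1 - f) = 1 - f by apply: le_car_add'.
have fcJ2 : (1 - f) * car (g + (1 - f)) = 1 - f by apply: proj_swap.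
have k1f : (1 - car (e + f)) * f = 0 by apply: m1B0r'.
have fk1 : f * (1 - car (e + f)) = 0 by apply: m1B0r.
have fck2 : (1 - f) * (1 - car (g + (1 - f))) = 0 by apply: m1B0r.
have k2fc : (1 - car (g + (1 - f))) * (1 - f) = 0 by apply: m1B0r'.
have fk2 : f * (1 - car (g + (1 - f))) = 1 - car (g + (1 - f)).
  by move: (sw0 fck2); rewrite subKr.
have k2f : (1 - car (g + (1 - f))) * f = 1 - car (g + (1 - f)).
  by apply/esym/m1B0.
have k12 : (1 - car (e + f)) * (1 - car (g + (1 - f))) = 0 by rewrite -fk2 mulrA k1f mul0r.
have k21 : (1 - car (g + (1 - f))) * (1 - car (e + f)) = 0 by rewrite -k2f -mulrA fk1 mulr0.
by have := commC (etrans k12 (esym k21)); rewrite !subKr.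
Qed.

Lemma cs_facts x y : pos x -> pos y -> x * x + y * y = 1 -> x * y = y * x ->
  x * x * (1 - car y) = 1 - car y /\ (1 - car y) * (x * x) = 1 - car y /\
  sle pos (1 - car y) (x * x) /\ sle pos (x * x) x.
Proof.
move=> Px Py Sxy Cxy.
have Ax := pos_A Px; have Ay := pos_A Py.
have [Pf Hf] := car_spec Ay; have Af := proj_A Pf.
have Exx : x * x = 1 - y * y by rewrite -Sxy addrK.
have Z : y * y * (1 - car y) = 0.
  by rewrite -mulrA (m1B0r (esym (car_r Ay))) mulr0.
have Z' : (1 - car y) * (y * y) = 0.
  by rewrite mulrA (m1B0r' (esym (car_l Ay))) mul0r.
have E1 : x * x * (1 - car y) = 1 - car y by rewrite Exx mulrBl mul1r Z subr0.
have E2 : (1 - car y) * (x * x) = 1 - car y by rewrite Exx mulrBr mulr1 Z' subr0.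
split => //; split => //; split.
  rewrite /sle.
  have -> : x * x - (1 - car y) = x * x * car y by rewrite -{1}E1 mulrBr mulr1 subKr.
  have Cfx : car y * x = x * car y by apply: car_comm.
  apply: comm_pos => //; first by apply: (sa2 HA).
    exact: proj_pos.
  by rewrite -mulrA -Cfx mulrA -Cfx -mulrA.
have Px1 : sle pos 1 (1 + x) by rewrite /sle addrC addKr.
have [w [Aw [E3 E4]]] := sa7 HA Px1.
have Cwx : w * x = x * w.
  have : (1 + x) * w = w * (1 + x) by rewrite E3 E4.
  by rewrite mulrDl mulrDr mul1r mulr1 => /addrI.
have Pw : pos w.
  have -> : w = w * w + w * x * w.
    by rewrite -{1}(mul1r w) -{1}E4 mulrDr mulr1 mulrDl.
  apply: (pos_D HA); first by apply: (sa2 HA).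
  exact: sand_pos.
have Cwxx : w * (x * x) = x * x * w by rewrite mulrA Cwx -mulrA Cwx mulrA.
have P1x : pos (1 - x).
  have -> : 1 - x = w * (y * y).
    have -> : y * y = (1 + x) * (1 - x).
      rewrite mulrDl mul1r mulrBr mulr1 addrA subrK.
      by rewrite -Sxy addrC addKr.
    by rewrite mulrA E4 mul1r.
  apply: comm_pos => //; first by apply: (sa2 HA).
  have -> : y * y = 1 - x * x by rewrite -Sxy addrC addKr.
  exact: commB1.
rewrite /sle.
have -> : x - x * x = x * (1 - x) by rewrite mulrBr mulr1.
apply: comm_pos => //; exact: commB1.
Qed.


Lemma main (p q : Rg) (hp : is_proj A p) (hq : is_proj A q) :
  let meet := pmeet A pos in
  let join := pjoin A pos in
  let car := carrier A in
  let le := sle pos in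
  let r := pcomm A pos p q in
  let c := psqrt pos (p * q * p + porth p * porth q * porth p) in
  let s := psqrt pos (p * porth q * p + porth p * q * porth p) in
  (cmt (car c) p /\ cmt (car c) q /\ cmt (car c) s /\ cmt (car c) r /\
   cmt (car s) p /\ cmt (car s) q /\ cmt (car s) r /\ cmt (car s) c /\
   cmt (car c) (car s)) /\
  (car c = meet (join p (porth q)) (join (porth p) q) /\
   car s = meet (join p q) (join (porth p) (porth q))) /\
  (car (c * s) = car c * car s /\
   car c * car s = meet (car c) (car s) /\
   meet (car c) (car s) =
     meet (meet (meet (join p q) (join p (porth q))) (join (porth p) q))
          (join (porth p) (porth q)) /\
   meet (meet (meet (join p q) (join p (porth q))) (join (porth p) q))
          (join (porth p) (porth q)) = r) /\
  (c ^+ 2 * porth (car s) = porth (car s) /\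
   porth (car s) * c ^+ 2 = porth (car s) /\
   le (porth (car s)) (c ^+ 2) /\ le (c ^+ 2) c) /\
  (s ^+ 2 * porth (car c) = porth (car c) /\
   porth (car c) * s ^+ 2 = porth (car c) /\
   le (porth (car c)) (s ^+ 2) /\ le (s ^+ 2) s).
Proof.
move=> meet join car0 le r c s.
have Er : r = meet (meet (meet (join p q) (join p (porth q))) (join (porth p) q))
          (join (porth p) (porth q)) by [].
rewrite /meet /join /car0 /le /porth in Er *.
rewrite /c /s; clear c s; rewrite /porth.
set u := p * q * p + (1 - p) * (1 - q) * (1 - p).
set v := p * (1 - q) * p + (1 - p) * q * (1 - p).
have Ap := proj_A hp; have Aq := proj_A hq.
have hpc := proj_c hp; have hqc := proj_c hq.
have Apc := proj_A hpc; have Aqc := proj_A hqc.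
have Pu : pos u by apply: (pos_D HA); apply: (sa3 HA); apply: proj_pos.
have Pv : pos v by apply: (pos_D HA); apply: (sa3 HA); apply: proj_pos.
have uv : u + v = 1 by apply: uv1; apply: projK.
have Ev : v = 1 - u by rewrite -uv addrC addKr.
have Eu : u = 1 - v by rewrite -uv addrK.
have Cup : u * p = p * u by apply: Cup_gen; apply: projK.
have Cuq : u * q = q * u.
  by rewrite /u usym ?projK //; apply: Cup_gen; apply: projK.
have Cvp : v * p = p * v by rewrite Ev; exact: (esym (commB1 (esym Cup))).
have Cvq : v * q = q * v by rewrite Ev; exact: (esym (commB1 (esym Cuq))).
have [Pc [CCc Ec]] := psqrt_spec Pu.
have [Ps [CCs Es]] := psqrt_spec Pv.
set c := psqrt pos u in Pc CCc Ec *.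
set s := psqrt pos v in Ps CCs Es *.
have Ac := pos_A Pc; have As := pos_A Ps.
have Ccp : c * p = p * c by apply: CCc.2.
have Ccq : c * q = q * c by apply: CCc.2.
have Csp : s * p = p * s by apply: CCs.2.
have Csq : s * q = q * s by apply: CCs.2.
have Cvs : v * s = s * v by rewrite -Es mulrA.
have Cus : u * s = s * u by rewrite Eu; exact: (esym (commB1 (esym Cvs))).
have Ccs : c * s = s * c by apply: CCc.2.
have Pec := car_P Ac; have Pes := car_P As.
have Aec := proj_A Pec; have Aes := proj_A Pes.
have Cesc : car s * c = c * car s by apply: car_comm.
have Cecs : car c * car s = car s * car c by apply: car_comm => //; rewrite Cesc.
have A_pq : A (p + q) by apply: (sub_D HA).
have A_pqc : A (p + (1 - q)) by apply: (sub_D HA).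
have A_pcq : A ((1 - p) + q) by apply: (sub_D HA).
have A_pcqc : A ((1 - p) + (1 - q)) by apply: (sub_D HA).
rewrite !join_eq //; rewrite !join_eq // in Er.
have [Kc CKc] := key hp hq.
have [Ks CKs] := key hp hqc.
rewrite subKr in Ks CKs.
have ec : car c = car (p + (1 - q)) * car ((1 - p) + q).
  by rewrite -car_sq // Ec.
have es : car s = car (p + q) * car ((1 - p) + (1 - q)).
  by rewrite -car_sq // Es.
have Pa := car_P A_pq; have Pb := car_P A_pqc.
have Pc' := car_P A_pcq; have Pd := car_P A_pcqc.
have Cab : car (p + q) * car (p + (1 - q)) = car (p + (1 - q)) * car (p + q) by apply: JC.
have Ccd : car ((1 - p) + q) * car ((1 - p) + (1 - q)) =
    car ((1 - p) + (1 - q)) * car ((1 - p) + q) by apply: JC.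
have Cac : car (p + q) * car ((1 - p) + q) = car ((1 - p) + q) * car (p + q).
  by rewrite (addrC p) (addrC (1 - p)); apply: JC.
have Cbd : car (p + (1 - q)) * car ((1 - p) + (1 - q)) =
    car ((1 - p) + (1 - q)) * car (p + (1 - q)).
  by rewrite (addrC p) (addrC (1 - p)); apply: JC.
have Cad : car (p + q) * car ((1 - p) + (1 - q)) = car ((1 - p) + (1 - q)) * car (p + q).
  by apply: JC.
have Cbc := CKc.
set Ja := car (p + q) in Pa Cab Cac Cad es Ks CKs *.
set Jb := car (p + (1 - q)) in Pb Cab Cbd Cbc ec Kc CKc *.
set Jc := car ((1 - p) + q) in Pc' Ccd Cac Cbc ec Kc CKc *.
set Jd := car ((1 - p) + (1 - q)) in Pd Ccd Cbd Cad es Ks CKs *.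
have Pab := proj_mul Pa Pb Cab.
have Cabc : Ja * Jb * Jc = Jc * (Ja * Jb) by apply: comm3.
have Pabc := proj_mul Pab Pc' Cabc.
have Cabcd : Ja * Jb * Jc * Jd = Jd * (Ja * Jb * Jc).
  apply: comm3 => //; apply: comm3 => //.
have Emeet : pmeet A pos (pmeet A pos (pmeet A pos Ja Jb) Jc) Jd = Ja * Jb * Jc * Jd.
  by rewrite meet_eq // meet_eq // meet_eq.
have Ecs : car c * car s = Ja * Jb * Jc * Jd.
  rewrite ec es !mulrA -(mulrA Jb Jc Ja) -Cac (mulrA Jb Ja) -Cab.
  by rewrite -(mulrA (Ja * Jb)).
have Err : r = car c * car s by rewrite Er Emeet Ecs.
have Cecr : car c * r = r * car c by rewrite Err mulrA projK // -mulrA -Cecs mulrA projK.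
have Cesr : car s * r = r * car s by rewrite Err mulrA -Cecs -mulrA projK // -mulrA projK.
have Scs : c * c + s * s = 1 by rewrite Ec Es.
have Ssc : s * s + c * c = 1 by rewrite Ec Es addrC.
have [F1 [F2 [F3 F4]]] := cs_facts Pc Ps Scs Ccs.
have [G1 [G2 [G3 G4]]] := cs_facts Ps Pc Ssc (esym Ccs).
rewrite !expr2.
split.
  split; first by apply: car_comm.
  split; first by apply: car_comm.
  split; first by apply: car_comm.
  split; first exact: Cecr.
  split; first by apply: car_comm.
  split; first by apply: car_comm.
  split; first exact: Cesr.
  split; first exact: Cesc.
  exact: Cecs.
split; first by split; [rewrite ec meet_eq // | rewrite es meet_eq //].
split.
  split; first by apply: car_prod.
  split; first by rewrite meet_eq.
  split; last by rewrite Er.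
  by rewrite meet_eq // Ecs Emeet.
by split.
Qed.

End Basics.

Theorem theorem4p4 (F : realType) (Rg : algType F) (A pos : Rg -> Prop)
  (HA : synaptic A pos) (p q : Rg) (hp : is_proj A p) (hq : is_proj A q) :
  let meet := pmeet A pos in
  let join := pjoin A pos in
  let car := carrier A in
  let le := sle pos in
  let r := pcomm A pos p q in
  let c := psqrt pos (p * q * p + porth p * porth q * porth p) in
  let s := psqrt pos (p * porth q * p + porth p * q * porth p) in
  (* (i) *)
  (cmt (car c) p /\ cmt (car c) q /\ cmt (car c) s /\ cmt (car c) r /\
   cmt (car s) p /\ cmt (car s) q /\ cmt (car s) r /\ cmt (car s) c /\
   cmt (car c) (car s)) /\
  (* (ii) *)
  (car c = meet (join p (porth q)) (join (porth p) q) /\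
   car s = meet (join p q) (join (porth p) (porth q))) /\
  (* (iii) *)
  (car (c * s) = car c * car s /\
   car c * car s = meet (car c) (car s) /\
   meet (car c) (car s) =
     meet (meet (meet (join p q) (join p (porth q))) (join (porth p) q))
          (join (porth p) (porth q)) /\
   meet (meet (meet (join p q) (join p (porth q))) (join (porth p) q))
          (join (porth p) (porth q)) = r) /\
  (* (iv) *)
  (c ^+ 2 * porth (car s) = porth (car s) /\
   porth (car s) * c ^+ 2 = porth (car s) /\
   le (porth (car s)) (c ^+ 2) /\ le (c ^+ 2) c) /\
  (* (v) *)
  (s ^+ 2 * porth (car c) = porth (car c) /\
   porth (car c) * s ^+ 2 = porth (car c) /\
   le (porth (car c)) (s ^+ 2) /\ le (s ^+ 2) s).
Proof. exact: (main HA hp hq). Qed.
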